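(* Let $\lambda>-1/2$, $\lambda\neq0$, let $M\ge0$, $a_0,\dots,a_M\in\mathbb{R}$ and $f_M(x)=\sum_{m=0}^M a_mC^{(\lambda)}_m(x)$. For integers $n\ge -1$ and $y\in[-1,1]$ let $\tilde R_n(y)=\int_{-1}^{y}f_M(y-1-t)\,C^{(\lambda)}_n(t)\,\mathrm{d}t$ (so $\tilde R_{-1}\equiv0$). Then $$\tilde R_0(y)=\int_{-1}^{y}f_M(t)\,\mathrm{d}t,$$ and for every integer $n\ge0$ and $y\in[-1,1]$, $$\tilde R_{n+1}(y)=2(n+\lambda)\int_{-1}^{y}\tilde R_n(s)\,\mathrm{d}s+\tilde R_{n-1}(y)+S^{(\lambda)}_n\int_{-1}^{y}f_M(t)\,\mathrm{d}t,$$ where $$S^{(\lambda)}_n=\frac{2(-1)^{n+1}(\lambda+n)(2\lambda-1)_n}{(n+1)!}.$$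
   Context: Gegenbauer polynomials $C^{(\lambda)}_n$ ($\lambda>-1/2$, $\lambda\ne0$) are defined by $C^{(\lambda)}_{-1}=0$, $C^{(\lambda)}_0=1$ and $2(n+\lambda)xC^{(\lambda)}_n(x)=(n+1)C^{(\lambda)}_{n+1}(x)+(n+2\lambda-1)C^{(\lambda)}_{n-1}(x)$ for $n\ge0$; $C^{(\lambda)}_n:=0$ for $n<0$. $(a)_n=a(a+1)\cdots(a+n-1)$ is the Pochhammer symbol, $(a)_0=1$. $\tilde R_n(y)$ is the convolution $\int_{-1}^{x+1}f_M(x-t)C^{(\lambda)}_n(t)\,\mathrm{d}t$ at $x=y-1$. *)

(* Defs.v *)
From Stdlib Require Import Reals ZArith.
From Coquelicot Require Import Coquelicot.
Open Scope R_scope.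

(* geg2 lam n x = (C^(lam)_n(x), C^(lam)_{n-1}(x)), via the three-term recurrence
   2(n+lam) x C_n = (n+1) C_{n+1} + (n+2lam-1) C_{n-1}, with C_{-1}=0, C_0=1. *)
Fixpoint geg2 (lam : R) (n : nat) (x : R) : R * R :=
  match n with
  | O => (1, 0)
  | S k => let (c, cp) := geg2 lam k x in
           ((2 * (INR k + lam) * x * c - (INR k + 2 * lam - 1) * cp) / (INR k + 1), c)
  end.

Definition gegen (lam : R) (n : nat) (x : R) : R := fst (geg2 lam n x).

Definition gegenZ (lam : R) (n : Z) (x : R) : R :=
  if (n <? 0)%Z then 0 else gegen lam (Z.to_nat n) x.

Fixpoint poch (a : R) (n : nat) : R :=
  match n with
  | O => 1
  | S k => poch a k * (a + INR k)
  end.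

Definition fM (lam : R) (M : nat) (a : nat -> R) (x : R) : R :=
  sum_f_R0 (fun m => a m * gegen lam m x) M.

Definition Rtilde (lam : R) (M : nat) (a : nat -> R) (n : Z) (y : R) : R :=
  RInt (fun t => fM lam M a (y - 1 - t) * gegenZ lam n t) (-1) y.

Definition Scoef (lam : R) (n : nat) : R :=
  2 * (-1) ^ (S n) * (lam + INR n) * poch (2 * lam - 1) n / INR (fact (S n)).

(* Main.v *)
Require Import Defs.
From Stdlib Require Import Reals ZArith Lra Lia.
From Coquelicot Require Import Coquelicot.
Open Scope R_scope.

Lemma D_eq (f : R -> R) (x a b : R) : is_derive f x a -> a = b -> is_derive f x b.
Proof. intros H ->; exact H. Qed.

Lemma D_mul (f g : R -> R) (x a b : R) : is_derive f x a -> is_derive g x b ->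
  is_derive (fun t => f t * g t) x (a * g x + f x * b).
Proof. intros Ha Hb. apply (is_derive_mult f g x a b Ha Hb). intros; apply Rmult_comm. Qed.

Lemma D_plus (f g : R -> R) (x a b : R) : is_derive f x a -> is_derive g x b ->
  is_derive (fun t => f t + g t) x (a + b).
Proof. intros Ha Hb. apply (is_derive_plus f g x a b Ha Hb). Qed.

Lemma D_minus (f g : R -> R) (x a b : R) : is_derive f x a -> is_derive g x b ->
  is_derive (fun t => f t - g t) x (a - b).
Proof. intros Ha Hb. apply (is_derive_minus f g x a b Ha Hb). Qed.

Lemma D_const (c x : R) : is_derive (fun _ => c) x 0.
Proof. apply (is_derive_const c x). Qed.

Lemma D_id (x : R) : is_derive (fun t => t) x 1.
Proof. apply (is_derive_id x). Qed.

Lemma D_comp (f g : R -> R) (x a b : R) : is_derive f (g x) a -> is_derive g x b ->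
  is_derive (fun t => f (g t)) x (b * a).
Proof. intros Ha Hb. apply (is_derive_comp f g x a b Ha Hb). Qed.

Lemma C_mul (f g : R -> R) (x : R) : continuous f x -> continuous g x -> continuous (fun t => f t * g t) x.
Proof. intros; apply (continuous_mult f g x); auto. Qed.
Lemma C_plus (f g : R -> R) (x : R) : continuous f x -> continuous g x -> continuous (fun t => f t + g t) x.
Proof. intros; apply (continuous_plus f g x); auto. Qed.
Lemma C_minus (f g : R -> R) (x : R) : continuous f x -> continuous g x -> continuous (fun t => f t - g t) x.
Proof. intros; apply (continuous_minus f g x); auto. Qed.
Lemma C_const (c x : R) : continuous (fun _ => c) x.
Proof. apply continuous_const. Qed.
Lemma C_id (x : R) : continuous (fun t => t) x.
Proof. apply continuous_id. Qed.
Lemma C_comp (f g : R -> R) x : continuous g x -> continuous f (g x) -> continuous (fun t => f (g t)) x.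
Proof. intros; apply (continuous_comp g f x); auto. Qed.

Lemma exR (f : R -> R) a b : (forall t, continuous f t) -> ex_RInt f a b.
Proof. intros H; apply (ex_RInt_continuous (V:=R_CompleteNormedModule)); intros; apply H. Qed.

Lemma derive_cont (f : R -> R) x d : is_derive f x d -> continuous f x.
Proof. intros H. apply (ex_derive_continuous (K:=R_AbsRing) (V:=R_NormedModule)). exists d; exact H. Qed.

Lemma geg2_S lam k x : geg2 lam (S k) x =
  ((2 * (INR k + lam) * x * fst (geg2 lam k x) - (INR k + 2 * lam - 1) * snd (geg2 lam k x)) / (INR k + 1),
   fst (geg2 lam k x)).
Proof. simpl. destruct (geg2 lam k x); reflexivity. Qed.

Fixpoint dd (lam : R) (n : nat) (x : R) : R * R :=
  match n with
  | O => (0, 0)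
  | S k => ((2 * (INR k + lam) * fst (geg2 lam k x) + 2 * (INR k + lam) * x * fst (dd lam k x)
             - (INR k + 2 * lam - 1) * snd (dd lam k x)) / (INR k + 1), fst (dd lam k x))
  end.

Lemma INR1 k : INR k + 1 <> 0.
Proof. pose proof (pos_INR k); lra. Qed.

Lemma deriv_geg lam n : forall x,
  is_derive (fun x => fst (geg2 lam n x)) x (fst (dd lam n x)) /\
  is_derive (fun x => snd (geg2 lam n x)) x (snd (dd lam n x)).
Proof.
  induction n as [|k IH]; intros x.
  - simpl. split; apply D_const.
  - split.
    + eapply is_derive_ext. { intro t. rewrite geg2_S. reflexivity. }
      simpl fst. unfold Rdiv.
      eapply D_eq.
      * apply D_mul; [|apply D_const].
        apply D_minus.
        -- apply D_mul; [apply D_mul; [apply D_const| apply D_id] | apply (proj1 (IH x))].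
        -- apply D_mul; [apply D_const | apply (proj2 (IH x))].
      * simpl. ring.
    + eapply is_derive_ext. { intro t. rewrite geg2_S. reflexivity. }
      simpl. apply (proj1 (IH x)).
Qed.

Lemma cont_dd lam n : forall x,
  continuous (fun x => fst (dd lam n x)) x /\ continuous (fun x => snd (dd lam n x)) x.
Proof.
  induction n as [|k IH]; intros x.
  - simpl. split; apply C_const.
  - simpl. split; [| apply (proj1 (IH x))].
    unfold Rdiv. apply C_mul; [|apply C_const].
    apply C_minus; [apply C_plus|].
    + apply C_mul; [apply C_const|]. eapply derive_cont.
      apply (proj1 (deriv_geg lam k x)).
    + apply C_mul; [apply C_mul; [apply C_const|apply C_id]|apply (proj1 (IH x))].
    + apply C_mul; [apply C_const|apply (proj2 (IH x))].
Qed.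

Lemma ident lam n x :
  x * fst (dd lam n x) - snd (dd lam n x) = INR n * fst (geg2 lam n x) /\
  fst (dd lam n x) - x * snd (dd lam n x) = (INR n - 1 + 2 * lam) * snd (geg2 lam n x).
Proof.
  induction n as [|k [IH1 IH2]].
  - simpl. split; ring.
  - assert (Hd : fst (dd lam (S k) x) = 2 * (INR k + lam) * fst (geg2 lam k x) + snd (dd lam k x)).
    { simpl fst at 1.
      replace (2 * (INR k + lam) * x * fst (dd lam k x)) with (2 * (INR k + lam) * (x * fst (dd lam k x))) by ring.
      assert (E : x * fst (dd lam k x) = snd (dd lam k x) + INR k * fst (geg2 lam k x)) by lra.
      rewrite E. field. apply INR1. }
    rewrite Hd. rewrite geg2_S. simpl snd. simpl fst. rewrite S_INR.
    assert (E2 : fst (dd lam k x) = x * snd (dd lam k x) + (INR k - 1 + 2 * lam) * snd (geg2 lam k x)) by lra.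
    rewrite E2. split.
    + field. apply INR1.
    + assert (E : x * (x * snd (dd lam k x) + (INR k - 1 + 2 * lam) * snd (geg2 lam k x)) = snd (dd lam k x) + INR k * fst (geg2 lam k x)) by (rewrite <- E2; lra).
      nra.
Qed.

Lemma Dstep lam n x : fst (dd lam (S n) x) - snd (dd lam n x) = 2 * (INR n + lam) * fst (geg2 lam n x).
Proof.
  destruct (ident lam n x) as [IH1 _].
  simpl fst at 1.
  replace (2 * (INR n + lam) * x * fst (dd lam n x)) with (2 * (INR n + lam) * (x * fst (dd lam n x))) by ring.
  assert (E : x * fst (dd lam n x) = snd (dd lam n x) + INR n * fst (geg2 lam n x)) by lra.
  rewrite E. field. apply INR1.
Qed.

Lemma poch_shift a m : poch a (S m) = a * poch (a + 1) m.
Proof.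
  induction m as [|m IH].
  - simpl. ring.
  - change (poch a (S (S m))) with (poch a (S m) * (a + INR (S m))).
    rewrite IH. simpl poch. rewrite S_INR. ring.
Qed.

Lemma fact_nz m : INR (fact m) <> 0.
Proof. apply not_0_INR. apply fact_neq_0. Qed.

Definition cm1 lam n := (-1) ^ n * poch (2 * lam) n / INR (fact n).

Lemma val_m1 lam n :
  fst (geg2 lam n (-1)) = cm1 lam n /\
  snd (geg2 lam n (-1)) = match n with O => 0 | S m => cm1 lam m end.
Proof.
  induction n as [|k [IH1 IH2]].
  - unfold cm1; simpl. split; [field|reflexivity].
  - rewrite geg2_S. simpl fst; simpl snd. split; [|exact IH1].
    rewrite IH1, IH2. destruct k as [|m].
    + unfold cm1; simpl. field.
    + unfold cm1. rewrite !fact_simpl, !mult_INR. cbn [poch pow].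
      rewrite !S_INR. pose proof (fact_nz m). pose proof (pos_INR m).
      field. repeat split; lra.
Qed.

Lemma K_val lam n :
  fst (geg2 lam (S n) (-1)) - snd (geg2 lam n (-1)) = Scoef lam n.
Proof.
  rewrite (proj1 (val_m1 lam (S n))), (proj2 (val_m1 lam n)).
  unfold Scoef. destruct n as [|m].
  - unfold cm1; simpl. field.
  - unfold cm1. rewrite (poch_shift (2 * lam - 1) m). replace (2 * lam - 1 + 1) with (2 * lam) by ring.
    rewrite !fact_simpl, !mult_INR. cbn [poch pow].
    rewrite !S_INR. pose proof (fact_nz m). pose proof (pos_INR m).
    field. repeat split; lra.
Qed.

Lemma cpt (f : R -> R) x : continuous f x -> continuity_pt f x.
Proof. intros H; apply continuity_pt_filterlim; exact H. Qed.

Section Conv.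
Variables (p dp g : R -> R).
Hypothesis Hp : forall x, is_derive p x (dp x).
Hypothesis Hdp : forall x, continuous dp x.
Hypothesis Hg : forall x, continuous g x.

Lemma p_cont x : continuous p x.
Proof. eapply derive_cont; apply Hp. Qed.

Lemma kd u t : is_derive (fun u => p (u - 1 - t) * g t) u (dp (u - 1 - t) * g t).
Proof.
  eapply D_eq.
  - apply D_mul; [apply (D_comp p (fun u => u - 1 - t))|apply D_const].
    + apply Hp.
    + apply D_minus; [apply D_minus; [apply D_id|apply D_const]|apply D_const].
  - cbv beta; ring.
Qed.

Lemma kc y t : continuous (fun t => p (y - 1 - t) * g t) t.
Proof.
  apply C_mul; [|apply Hg].
  apply (C_comp p (fun t => y - 1 - t)).
  - apply C_minus; [apply C_const|apply C_id].
  - apply p_cont.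
Qed.

Lemma kex y a b : ex_RInt (fun t => p (y - 1 - t) * g t) a b.
Proof. apply exR. apply kc. Qed.

Lemma conv_deriv y :
  is_derive (fun y => RInt (fun t => p (y - 1 - t) * g t) (-1) y) y
    (RInt (fun t => dp (y - 1 - t) * g t) (-1) y + p (-1) * g y).
Proof.
  pose (f := fun y t => p (y - 1 - t) * g t).
  assert (HD : forall u v, Derive (fun z => f z v) u = dp (u - 1 - v) * g v).
  { intros u v. apply is_derive_unique. apply kd. }
  assert (H2 : forall u v, continuity_2d_pt (fun u v => Derive (fun z => f z v) u) u v).
  { intros u v. eapply continuity_2d_pt_ext. { intros; symmetry; apply HD. }
    apply continuity_2d_pt_mult.
    - apply (continuity_1d_2d_pt_comp dp (fun u v => u - 1 - v)).
      + apply cpt, Hdp.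
      + apply continuity_2d_pt_minus; [apply continuity_2d_pt_minus|].
        * apply continuity_2d_pt_id1.
        * apply continuity_2d_pt_const.
        * apply continuity_2d_pt_id2.
    - apply (continuity_1d_2d_pt_comp g (fun u v => v)).
      + apply cpt, Hg.
      + apply continuity_2d_pt_id2. }
  eapply D_eq.
  - apply (is_derive_RInt_param_bound_comp_aux3 f (-1) (fun y => y) y 1).
    + apply filter_forall. intros; apply kex.
    + exists (mkposreal 1 Rlt_0_1). apply filter_forall. intros; apply kex.
    + apply D_id.
    + exists (mkposreal 1 Rlt_0_1). apply filter_forall. intros.
      eexists. apply kd.
    + intros; apply H2.
    + exists (mkposreal 1 Rlt_0_1). intros; apply H2.
    + apply cpt. apply kc.
  - unfold f. f_equal.
    + apply RInt_ext. intros; apply HD.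
    + replace (y - 1 - y) with (-1) by ring. ring.
Qed.

End Conv.

Lemma prim_deriv (g : R -> R) (Hg : forall x, continuous g x) a t :
  is_derive (fun t => RInt g a t) t (g t).
Proof.
  apply (is_derive_RInt (V:=R_NormedModule) g (fun t => RInt g a t) a t).
  - apply filter_forall. intros b. apply (RInt_correct (V:=R_CompleteNormedModule)). apply exR, Hg.
  - apply Hg.
Qed.

Lemma RInt_zero a b : RInt (fun _ => 0) a b = 0.
Proof. rewrite (RInt_const (V:=R_CompleteNormedModule)). unfold scal; simpl. unfold mult; simpl. ring. Qed.

Lemma RInt_pt (f : R -> R) a : RInt f a a = 0.
Proof. apply (RInt_point (V:=R_CompleteNormedModule)). Qed.

Lemma ftc (f df : R -> R) a b : (forall x, is_derive f x (df x)) -> (forall x, continuous df x) ->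
  RInt df a b = f b - f a.
Proof.
  intros H1 H2. apply (is_RInt_unique (V:=R_CompleteNormedModule)).
  apply (is_RInt_derive (V:=R_CompleteNormedModule)); intros; auto.
Qed.

Lemma eq_from_deriv (F H dF : R -> R) a y :
  (forall x, is_derive F x (dF x)) -> (forall x, is_derive H x (dF x)) -> F a = H a -> F y = H y.
Proof.
  intros HF HH Ha.
  assert (E : RInt (fun _ => 0) a y = (F y - H y) - (F a - H a)).
  { apply (ftc (fun x => F x - H x)).
    - intros x. eapply D_eq. apply D_minus; [apply HF|apply HH]. ring.
    - intros; apply C_const. }
  rewrite RInt_zero in E. lra.
Qed.

Lemma conv_swap (p dp g : R -> R)
  (Hp : forall x, is_derive p x (dp x)) (Hdp : forall x, continuous dp x)
  (Hg : forall x, continuous g x) (y : R) :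
  RInt (fun t => p (y - 1 - t) * RInt g (-1) t) (-1) y =
  RInt (fun s => RInt (fun t => p (s - 1 - t) * g t) (-1) s) (-1) y.
Proof.
  set (Gg := fun t => RInt g (-1) t).
  assert (HG : forall t, is_derive Gg t (g t)) by (intros; apply prim_deriv; auto).
  assert (HGc : forall t, continuous Gg t) by (intros; eapply derive_cont; apply HG).
  set (Rf := fun s => RInt (fun t => p (s - 1 - t) * g t) (-1) s).
  assert (HRc : forall s, continuous Rf s).
  { intros s. eapply derive_cont. apply (conv_deriv p dp g Hp Hdp Hg). }
  assert (BP : forall y, RInt (fun t => dp (y - 1 - t) * Gg t) (-1) y = Rf y - p (-1) * Gg y).
  { clear y. intros y.
    assert (E : RInt (fun t => dp (y - 1 - t) * Gg t - p (y - 1 - t) * g t) (-1) y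
                = (0 - (p (y - 1 - y) * Gg y)) - (0 - (p (y - 1 - -1) * Gg (-1)))).
    { apply (ftc (fun t => 0 - (p (y - 1 - t) * Gg t))).
      - intros x. eapply D_eq.
        + apply D_minus; [apply D_const|]. apply D_mul; [|apply HG].
          apply (D_comp p (fun t => y - 1 - t)); [apply Hp|].
          apply D_minus; [apply D_const|apply D_id].
        + cbv beta. ring.
      - intros x. apply C_minus.
        + apply C_mul; [|apply HGc]. apply (C_comp dp (fun t => y - 1 - t)); [|apply Hdp].
          apply C_minus; [apply C_const|apply C_id].
        + apply (kc p dp g Hp Hg). }
    rewrite (RInt_minus (V:=R_CompleteNormedModule)) in E.
    2:{ apply exR. intros t. apply C_mul; [|apply HGc]. apply (C_comp dp (fun t => y - 1 - t)); [|apply Hdp].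
          apply C_minus; [apply C_const|apply C_id]. }
    2:{ apply (kex p dp g Hp Hg). }
    change (minus (RInt (fun t => dp (y - 1 - t) * Gg t) (-1) y) (RInt (fun t => p (y - 1 - t) * g t) (-1) y))
      with (RInt (fun t => dp (y - 1 - t) * Gg t) (-1) y - Rf y) in E.
    assert (G0 : Gg (-1) = 0) by (unfold Gg; apply RInt_pt).
    rewrite G0 in E. replace (y - 1 - y) with (-1) in E by ring. lra. }
  apply (eq_from_deriv (fun y => RInt (fun t => p (y - 1 - t) * Gg t) (-1) y)
                       (fun y => RInt Rf (-1) y) Rf (-1) y).
  - intros x. eapply D_eq. apply (conv_deriv p dp Gg Hp Hdp HGc). rewrite BP. ring.
  - intros x. apply prim_deriv. auto.
  - rewrite !RInt_pt. reflexivity.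
Qed.

Lemma eqR (x y : R) : x = y -> x = y.
Proof. auto. Qed.

Lemma RInt_plus2 (f g : R -> R) a b : (forall t, continuous f t) -> (forall t, continuous g t) ->
  RInt (fun t => f t + g t) a b = RInt f a b + RInt g a b.
Proof. intros Hf Hg. exact (RInt_plus (V:=R_CompleteNormedModule) f g a b (exR f a b Hf) (exR g a b Hg)). Qed.

Lemma RInt_scalR (f : R -> R) c a b : (forall t, continuous f t) ->
  RInt (fun t => c * f t) a b = c * RInt f a b.
Proof. intros Hf. exact (RInt_scal (V:=R_CompleteNormedModule) f a b c (exR f a b Hf)). Qed.

Lemma conv_one (p : R -> R) (Hp : forall t, continuous p t) y :
  RInt (fun t => p (y - 1 - t)) (-1) y = RInt p (-1) y.
Proof.
  assert (E := RInt_comp_lin (V:=R_CompleteNormedModule) p (-1) (y - 1) (-1) y).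
  replace (-1 * -1 + (y - 1)) with y in E by ring.
  replace (-1 * y + (y - 1)) with (-1) in E by ring.
  specialize (E (exR p _ _ Hp)).
  rewrite <- (opp_RInt_swap (V:=R_CompleteNormedModule) p (-1) y) in E by (apply exR; exact Hp).
  assert (E2 : RInt (fun t => p (y - 1 - t)) (-1) y = RInt (fun t => (-1) * (scal (-1) (p (-1 * t + (y - 1))))) (-1) y).
  { apply RInt_ext. intros t _. unfold scal; simpl; unfold mult; simpl.
    replace (-1 * t + (y - 1)) with (y - 1 - t) by ring. ring. }
  rewrite E2. rewrite RInt_scalR.
  - assert (E3 : RInt (fun t => scal (-1) (p (-1 * t + (y - 1)))) (-1) y = - RInt p (-1) y) by exact E. rewrite E3. change (@eq R (-1 * - RInt p (-1) y) (RInt p (-1) y)). ring.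
  - intros t. unfold scal; simpl; unfold mult; simpl. apply C_mul; [apply C_const|].
    apply (C_comp p (fun t => -1 * t + (y - 1))); [|apply Hp].
    apply C_plus; [apply C_mul; [apply C_const|apply C_id]|apply C_const].
Qed.

Definition fMd lam M a x := sum_f_R0 (fun m => a m * fst (dd lam m x)) M.

Lemma fM_deriv lam M a x : is_derive (fM lam M a) x (fMd lam M a x).
Proof.
  unfold fM, fMd. induction M as [|M IH]; cbn [sum_f_R0].
  - eapply D_eq. apply D_mul; [apply D_const|apply (proj1 (deriv_geg lam 0 x))]. simpl; ring.
  - eapply D_eq. apply D_plus; [apply IH|]. apply D_mul; [apply D_const|apply (proj1 (deriv_geg lam (S M) x))].
    cbv beta; ring.
Qed.

Lemma fMd_cont lam M a x : continuous (fMd lam M a) x.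
Proof.
  unfold fMd. induction M as [|M IH]; cbn [sum_f_R0].
  - apply C_mul; [apply C_const|apply (proj1 (cont_dd lam 0 x))].
  - apply C_plus; [apply IH|]. apply C_mul; [apply C_const|apply (proj1 (cont_dd lam (S M) x))].
Qed.

Lemma fM_cont lam M a x : continuous (fM lam M a) x.
Proof. eapply derive_cont. apply fM_deriv. Qed.

Lemma gegen_cont lam n x : continuous (gegen lam n) x.
Proof. eapply derive_cont. apply (proj1 (deriv_geg lam n x)). Qed.

Lemma snd_cont lam n x : continuous (fun t => snd (geg2 lam n t)) x.
Proof. eapply derive_cont. apply (proj2 (deriv_geg lam n x)). Qed.

Lemma gZ1 lam n t : gegenZ lam (Z.of_nat n + 1) t = gegen lam (S n) t.
Proof.
  unfold gegenZ. replace (Z.of_nat n + 1)%Z with (Z.of_nat (S n)) by lia.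
  replace (Z.of_nat (S n) <? 0)%Z with false by (symmetry; apply Z.ltb_ge; lia).
  rewrite Nat2Z.id. reflexivity.
Qed.

Lemma gZ0 lam n t : gegenZ lam (Z.of_nat n) t = gegen lam n t.
Proof.
  unfold gegenZ.
  replace (Z.of_nat n <? 0)%Z with false by (symmetry; apply Z.ltb_ge; lia).
  rewrite Nat2Z.id. reflexivity.
Qed.

Lemma gZm lam n t : gegenZ lam (Z.of_nat n - 1) t = snd (geg2 lam n t).
Proof.
  destruct n as [|m].
  - reflexivity.
  - replace (Z.of_nat (S m) - 1)%Z with (Z.of_nat m) by lia. rewrite gZ0.
    rewrite geg2_S. reflexivity.
Qed.

Lemma A_id lam n t : gegen lam (S n) t =
  2 * (INR n + lam) * RInt (gegen lam n) (-1) t + snd (geg2 lam n t) + Scoef lam n.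
Proof.
  assert (E : RInt (fun t => 2 * (INR n + lam) * gegen lam n t) (-1) t =
     (fst (geg2 lam (S n) t) - snd (geg2 lam n t)) - (fst (geg2 lam (S n) (-1)) - snd (geg2 lam n (-1)))).
  { apply (ftc (fun t => fst (geg2 lam (S n) t) - snd (geg2 lam n t))).
    - intros x. eapply D_eq. apply D_minus; [apply (proj1 (deriv_geg lam (S n) x))|apply (proj2 (deriv_geg lam n x))].
      unfold gegen. apply Dstep.
    - intros x. apply C_mul; [apply C_const|apply gegen_cont]. }
  rewrite RInt_scalR in E by (intros; apply gegen_cont).
  rewrite K_val in E. unfold gegen in *. lra.
Qed.

Theorem theorem4p2 (lam : R) (M : nat) (a : nat -> R) :
  -1/2 < lam -> lam <> 0 ->
  (forall y : R, -1 <= y <= 1 ->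
     Rtilde lam M a 0%Z y = RInt (fun t => fM lam M a t) (-1) y) /\
  (forall (n : nat) (y : R), -1 <= y <= 1 ->
     Rtilde lam M a (Z.of_nat n + 1)%Z y =
       2 * (INR n + lam) * RInt (fun s => Rtilde lam M a (Z.of_nat n) s) (-1) y
       + Rtilde lam M a (Z.of_nat n - 1)%Z y
       + Scoef lam n * RInt (fun t => fM lam M a t) (-1) y).
Proof.
  intros _ _.
  assert (Hp := fM_deriv lam M a). assert (Hdp := fMd_cont lam M a).
  assert (Hpc := fM_cont lam M a).
  assert (P1 : forall y, Rtilde lam M a 0%Z y = RInt (fun t => fM lam M a t) (-1) y).
  { intros y. unfold Rtilde.
    transitivity (RInt (fun t => fM lam M a (y - 1 - t)) (-1) y).
    2:{ exact (conv_one (fM lam M a) Hpc y). }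
    apply RInt_ext. intros t _. unfold gegenZ. simpl. unfold gegen; simpl. ring. }
  split; [intros y _; apply P1|].
  intros n y _.
  set (p := fM lam M a). set (G := fun t => RInt (gegen lam n) (-1) t).
  assert (HG : forall t, continuous G t).
  { intros t. eapply derive_cont. apply prim_deriv. apply gegen_cont. }
  unfold Rtilde at 1.
  transitivity (RInt (fun t => (2 * (INR n + lam) * (p (y - 1 - t) * G t) + p (y - 1 - t) * snd (geg2 lam n t))
                               + Scoef lam n * p (y - 1 - t)) (-1) y).
  { apply RInt_ext. intros t _. rewrite gZ1, A_id. unfold p, G. apply eqR. ring. }
  rewrite RInt_plus2.
  2:{ intros t. apply C_plus.
      - apply C_mul; [apply C_const|]. apply (kc p (fMd lam M a) G Hp HG).
      - apply (kc p (fMd lam M a) _ Hp (snd_cont lam n)). }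
  2:{ intros t. apply C_mul; [apply C_const|]. apply (C_comp p (fun t => y - 1 - t)); [|apply Hpc].
      apply C_minus; [apply C_const|apply C_id]. }
  rewrite RInt_plus2.
  2:{ intros t. apply C_mul; [apply C_const|]. apply (kc p (fMd lam M a) G Hp HG). }
  2:{ intros t. apply (kc p (fMd lam M a) _ Hp (snd_cont lam n)). }
  rewrite RInt_scalR.
  2:{ intros t. apply (kc p (fMd lam M a) G Hp HG). }
  rewrite (RInt_scalR (fun t => p (y - 1 - t))).
  2:{ intros t. apply (C_comp p (fun t => y - 1 - t)); [|apply Hpc].
      apply C_minus; [apply C_const|apply C_id]. }
  rewrite (conv_one p Hpc y).
  unfold G. rewrite (conv_swap p (fMd lam M a) (gegen lam n) Hp Hdp (gegen_cont lam n) y).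
  assert (E1 : RInt (fun s => RInt (fun t => p (s - 1 - t) * gegen lam n t) (-1) s) (-1) y
              = RInt (fun s => Rtilde lam M a (Z.of_nat n) s) (-1) y).
  { apply RInt_ext. intros s _. unfold Rtilde. apply RInt_ext. intros t _. rewrite gZ0. reflexivity. }
  assert (E2 : RInt (fun t => p (y - 1 - t) * snd (geg2 lam n t)) (-1) y = Rtilde lam M a (Z.of_nat n - 1) y).
  { unfold Rtilde. apply RInt_ext. intros t _. rewrite gZm. reflexivity. }
  rewrite E1, E2. reflexivity.
Qed.
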